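(* Let $u\in\mathbb Z$, $\ell,d_1,\dots,d_\ell\in\mathbb N$ and $\phi(\tau,z)=\eta(\tau)^u\prod_{i=1}^\ell\vartheta(\tau,d_iz)$. Then, regarding $\phi$ and $\frac{\phi(2\tau,2z)}{\phi(\tau,z)}$ as formal series in $R(24)$, $$\nu_J\Bigl(\frac{\phi(2\tau,2z)}{\phi(\tau,z)}\Bigr)=\nu_J(\phi).$$
   Context: $q=e^{2\pi i\tau}$, $\zeta=e^{2\pi iz}$; $\eta(\tau)=q^{1/24}\prod_{n\ge1}(1-q^n)$ and $\vartheta(\tau,z)=q^{1/8}(\zeta^{1/2}-\zeta^{-1/2})\prod_{j\ge1}(1-q^j\zeta)(1-q^j\zeta^{-1})(1-q^j)$. With $v=\frac{u+3\ell}{24}$ and $k=\frac{\ell+u}2$ one has the product expansions $\phi=q^v\prod_{j}(1-q^j)^{2k}\prod_i(\zeta^{d_i/2}-\zeta^{-d_i/2})\prod_{i,j}(1-q^j\zeta^{d_i})(1-q^j\zeta^{-d_i})$ and $\frac{\phi(2\tau,2z)}{\phi(\tau,z)}=q^v\prod_{j}(1+q^j)^{2k}\prod_i(\zeta^{d_i/2}+\zeta^{-d_i/2})\prod_{i,j}(1+q^j\zeta^{d_i})(1+q^j\zeta^{-d_i})$, which are formal series in $R(24)$. Here $R(N)=\mathbb C[\zeta^{1/N},\zeta^{-1/N}]((q^{1/N}))$ is the ring of formal series $f=\sum_{n,r\in\frac1N\mathbb Z}c(n,r)q^n\zeta^r$ with finitely many $r$ for each $n$ and $n$ bounded below on $\operatorname{supp}(f)=\{(n,r):c(n,r)\neq0\}$.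 For $P\subseteq\mathbb R^2$, $\operatorname{conv}(P;\vec A)=\operatorname{conv}(P)+[0,\infty)\times\{0\}$ and $\nu_J(f)=\operatorname{Closure}_{\mathbb R^2}(\operatorname{conv}(\operatorname{supp}(f);\vec A))$. *)

(* Defs.v *)
From HB Require Import structures.
From mathcomp Require Import all_boot all_order all_algebra.
From mathcomp Require Import all_classical all_reals all_analysis.
Set Implicit Arguments. Unset Strict Implicit. Unset Printing Implicit Defensive.
Import Order.TTheory GRing.Theory Num.Theory.
Import numFieldNormedType.Exports.
Local Open Scope classical_set_scope.
Local Open Scope ring_scope.

(* Formal series are encoded via truncations in {poly {poly int}}:
   the outer variable qX is q, the inner variable YX is Y = zeta^(1/2).
   Negative powers of Y are removed by multiplying each factor by a power
   of Y (tracked by an explicit shift); negative powers of (1 +- q^j) are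
   replaced by geometric sums truncated at order N, which is exact modulo
   q^(N+1). *)
Definition qX : {poly {poly int}} := 'X.
Definition YX : {poly {poly int}} := ('X : {poly int})%:P.

(* sg = -1 : the product expansion of phi / q^v;
   sg =  1 : the product expansion of phi(2tau,2z)/phi(tau,z) / q^v.
   e = 2k = l + u. *)
Definition etaf (sg e : int) (j N : nat) : {poly {poly int}} :=
  match e with
  | Posz m => (1 + sg%:~R * qX ^+ j) ^+ m
  | Negz m => (\sum_(0 <= t < N.+1) (- (sg%:~R * qX ^+ j)) ^+ t) ^+ m.+1
  end.

(* Y^(sum d) * (1 +- ...) truncated product up to j = N, times
   Y^(2 * N * sum d). *)
Definition prodser (sg e : int) (d : seq nat) (N : nat) : {poly {poly int}} :=
  (\prod_(x <- d) (YX ^+ (2 * x) + sg%:~R)) *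
  \prod_(1 <= j < N.+1)
     (etaf sg e j N *
      \prod_(x <- d) ((YX ^+ (2 * x) + sg%:~R * qX ^+ j) *
                      (1 + sg%:~R * qX ^+ j * YX ^+ (2 * x)))).

(* coefficient of q^(v + n) zeta^(s/2) (v = (u+3l)/24 the common prefactor) *)
Definition coefser (sg u : int) (d : seq nat) (n : nat) (s : int) : int :=
  let e := (size d)%:Z + u in
  let sh := (sumn d + n * (2 * sumn d))%N in
  match s + sh%:Z with
  | Posz m => ((prodser sg e d n)`_n)`_m
  | Negz _ => 0
  end.

Definition coef_phi (u : int) (d : seq nat) := coefser (-1) u d.
Definition coef_quot (u : int) (d : seq nat) := coefser 1 u d.

(* support in R^2 (coordinates: (q-exponent, zeta-exponent)) *)
Definition supp (R : realType) (v : R) (c : nat -> int -> int) : set (R * R) :=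
  [set p | exists (n : nat) (s : int), c n s != 0 /\ p = (v + n%:R, s%:~R / 2)].

Definition conv (R : realType) (P : set (R * R)) : set (R * R) :=
  [set x | exists (m : nat) (w : 'I_m -> R) (p : 'I_m -> R * R),
      (forall i, 0 <= w i) /\ \sum_(i < m) w i = 1 /\ (forall i, P (p i)) /\
      x = (\sum_(i < m) w i * (p i).1, \sum_(i < m) w i * (p i).2)].

Definition convA (R : realType) (P : set (R * R)) : set (R * R) :=
  [set x | exists y t, conv P y /\ 0 <= t /\ x = (y.1 + t, y.2)].

Definition nuJ (R : realType) (P : set (R * R)) : set (R * R) :=
  closure (convA P).

Definition vexp (R : realType) (u : int) (d : seq nat) : R :=
  (u + 3 * (size d)%:Z)%:~R / 24.

(* Main.v *)
Require Import Defs.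
From HB Require Import structures.
From mathcomp Require Import all_boot all_order all_algebra.
From mathcomp Require Import all_classical all_reals all_analysis.
From mathcomp Require Import ring lra zify.
Import Order.TTheory GRing.Theory Num.Theory.
Import numFieldNormedType.Exports.
Set Implicit Arguments. Unset Strict Implicit. Unset Printing Implicit Defensive.
Local Open Scope classical_set_scope.
Local Open Scope ring_scope.

Local Open Scope ring_scope.


Definition P2 := {poly {poly int}}.
Definition cf (P : P2) (n m : nat) : int := P`_n`_m.
Definition mono (k : int) (i l : nat) : P2 := k%:~R * qX ^+ i * YX ^+ l.

Lemma cf_mono k i l n m : cf (mono k i l) n m = if (n == i) && (m == l) then k else 0.
Proof.
rewrite /cf /mono /qX /YX.
have -> : (k%:~R * 'X ^+ i * ('X%:P) ^+ l : P2) = ((k%:~R * 'X^l : {poly int})%:P) * 'X^i.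
  rewrite rmorphM /= rmorphXn /= rmorph_int. ring.
rewrite coefCM coefXn.
case: (n == i) => /=; last by rewrite mulr0 coef0.
rewrite mulr1 -[in LHS](intz k) -polyC1 -polyCMz coefCM coefXn.
by case: (m == l); rewrite ?mulr1 ?mulr0 ?intz.
Qed.

Lemma cfD P Q n m : cf (P + Q) n m = cf P n m + cf Q n m.
Proof. by rewrite /cf !coefD. Qed.

Lemma cfM P Q n m : cf (P * Q) n m =
  \sum_(i < n.+1) \sum_(k < m.+1) cf P i k * cf Q (n - i) (m - k).
Proof. rewrite /cf coefM coef_sum; apply: eq_bigr => i _; by rewrite coefM. Qed.

Lemma cf1 n m : cf 1 n m = if (n == 0%N) && (m == 0%N) then 1 else 0.
Proof. by rewrite -(cf_mono 1 0 0) /mono expr0 !mulr1. Qed.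

Lemma cfM_supp P Q n m : cf (P * Q) n m != 0 ->
  exists i k, [/\ (i <= n)%N, (k <= m)%N, cf P i k != 0 & cf Q (n - i) (m - k) != 0].
Proof.
rewrite cfM => H.
case: (boolp.pselect (exists i k, [/\ (i <= n)%N, (k <= m)%N, cf P i k != 0 & cf Q (n - i) (m - k) != 0])) => // Hn.
exfalso; move/negP: H; apply; apply/eqP.
apply: big1 => i _; apply: big1 => k _.
case: (boolp.pselect (cf P i k = 0)) => [->|h1]; first by rewrite mul0r.
case: (boolp.pselect (cf Q (n - i) (m - k) = 0)) => [->|h2]; first by rewrite mulr0.
exfalso; apply: Hn; exists i, k; split; [exact: (ltnSE (ltn_ord i)) | exact: (ltnSE (ltn_ord k)) | by apply/eqP | by apply/eqP].
Qed.

Definition ltx (x1 x2 y1 y2 : int) := (x1 < y1) \/ (x1 = y1 /\ x2 < y2).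

Section UMsec.
Variables (e t a b : int).
Definition sc1 (n m : nat) : int := e * b * m%:Z - a * n%:Z.
Definition sc2 (n : nat) : int := t * n%:Z.

Definition UM (P : P2) (pn pm : nat) (c : int) :=
  [/\ cf P pn pm = c, c != 0 &
      forall n m, cf P n m != 0 -> (n, m) <> (pn, pm) ->
        ltx (sc1 n m) (sc2 n) (sc1 pn pm) (sc2 pn)].

Definition SB (Q : P2) (pn pm : nat) :=
  forall n m, cf Q n m != 0 -> ltx (sc1 n m) (sc2 n) (sc1 pn pm) (sc2 pn).

Lemma ltx_irr x1 x2 : ~ ltx x1 x2 x1 x2.
Proof. rewrite /ltx; lia. Qed.

Lemma UM_le P pn pm c n m : UM P pn pm c -> cf P n m != 0 -> sc1 n m <= sc1 pn pm.
Proof.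
case=> _ _ H hnm.
case: (boolp.pselect ((n, m) = (pn, pm))) => [[e1 e2]|hne]; first by rewrite e1 e2.
case: (H n m hnm hne); rewrite /ltx; lia.
Qed.

Lemma UM_eq P pn pm c pn' pm' c' : UM P pn pm c -> pn = pn' -> pm = pm' -> c = c' -> UM P pn' pm' c'.
Proof. by move=> H <- <- <-. Qed.

Lemma SB_add P Q pn pm : SB P pn pm -> SB Q pn pm -> SB (P + Q) pn pm.
Proof.
move=> HP HQ n m; rewrite cfD => H.
case: (boolp.pselect (cf P n m = 0)) => h.
  by apply: HQ; move: H; rewrite h add0r.
by apply: HP; apply/eqP.
Qed.

Lemma SB_sum (I : eqType) (r : seq I) (F : I -> P2) pn pm :
  (forall i, i \in r -> SB (F i) pn pm) -> SB (\sum_(i <- r) F i) pn pm.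
Proof.
elim: r => [|x r IH] H.
  by move=> n m; rewrite big_nil /cf coef0 coef0 eqxx.
rewrite big_cons; apply: SB_add; first by apply: H; rewrite in_cons eqxx.
by apply: IH => i hi; apply: H; rewrite in_cons hi orbT.
Qed.

Lemma UM_addS P Q pn pm c : UM P pn pm c -> SB Q pn pm -> UM (P + Q) pn pm c.
Proof.
case=> h1 h2 h3 HQ; split => //.
  rewrite cfD h1.
  case: (boolp.pselect (cf Q pn pm = 0)) => [->|h]; first by rewrite addr0.
  by exfalso; apply: (@ltx_irr (sc1 pn pm) (sc2 pn)); apply: HQ; apply/eqP.
move=> n m; rewrite cfD => H hne.
case: (boolp.pselect (cf Q n m = 0)) => h.
  by apply: h3 => //; move: H; rewrite h addr0.
by apply: HQ; apply/eqP.
Qed.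

Lemma UM_mono k i l : k != 0 -> UM (mono k i l) i l k.
Proof.
move=> hk; split => //; first by rewrite cf_mono !eqxx.
move=> n m; rewrite cf_mono; case: ifP => [/andP [/eqP -> /eqP ->] _ []|] //.
all: try by rewrite eqxx.
Qed.

Lemma SB_mono k i l pn pm : ltx (sc1 i l) (sc2 i) (sc1 pn pm) (sc2 pn) -> SB (mono k i l) pn pm.
Proof.
move=> H n m; rewrite cf_mono; case: ifP => [/andP [/eqP -> /eqP ->] _ //|].
all: try by rewrite eqxx.
Qed.

Lemma UM_1 : UM 1 0 0 1.
Proof.
have -> : (1 : P2) = mono 1 0 0 by rewrite /mono expr0 !mulr1.
by apply: UM_mono.
Qed.

Lemma sc1D n1 m1 n2 m2 : sc1 (n1 + n2) (m1 + m2) = sc1 n1 m1 + sc1 n2 m2.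
Proof. rewrite /sc1 !PoszD; ring. Qed.
Lemma sc2D n1 n2 : sc2 (n1 + n2) = sc2 n1 + sc2 n2.
Proof. rewrite /sc2 !PoszD; ring. Qed.

Lemma ltx_add x1 x2 y1 y2 u1 u2 v1 v2 : ltx x1 x2 y1 y2 ->
  ltx u1 u2 v1 v2 \/ (u1 = v1 /\ u2 = v2) -> ltx (x1 + u1) (x2 + u2) (y1 + v1) (y2 + v2).
Proof. rewrite /ltx; lia. Qed.

Lemma ltx_sum_irr x1 x2 u1 u2 y1 y2 v1 v2 : ltx x1 x2 y1 y2 ->
  ltx u1 u2 v1 v2 \/ (u1 = v1 /\ u2 = v2) ->
  x1 + u1 = y1 + v1 -> x2 + u2 = y2 + v2 -> False.
Proof. rewrite /ltx; lia. Qed.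

Lemma UM_mul P Q p1 q1 c1 p2 q2 c2 :
  UM P p1 q1 c1 -> UM Q p2 q2 c2 -> UM (P * Q) (p1 + p2) (q1 + q2) (c1 * c2).
Proof.
case=> hP1 hP2 hP3 [hQ1 hQ2 hQ3].
have key : forall i k, (i <= p1 + p2)%N -> (k <= q1 + q2)%N -> cf P i k != 0 ->
    cf Q (p1 + p2 - i) (q1 + q2 - k) != 0 -> (i, k) = (p1, q1).
  move=> i k hi hk h1 h2.
  case: (boolp.pselect ((i, k) = (p1, q1))) => // hne; exfalso.
  have L1 := hP3 _ _ h1 hne.
  have E1 : sc1 i k + sc1 (p1 + p2 - i) (q1 + q2 - k) = sc1 p1 q1 + sc1 p2 q2.
    by rewrite -!sc1D !subnKC.
  have E2 : sc2 i + sc2 (p1 + p2 - i) = sc2 p1 + sc2 p2 by rewrite -!sc2D subnKC.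
  have X : ltx (sc1 (p1 + p2 - i) (q1 + q2 - k)) (sc2 (p1 + p2 - i)) (sc1 p2 q2) (sc2 p2) \/
     (sc1 (p1 + p2 - i) (q1 + q2 - k) = sc1 p2 q2 /\ sc2 (p1 + p2 - i) = sc2 p2).
    case: (boolp.pselect ((p1 + p2 - i, q1 + q2 - k)%N = (p2, q2))) => [[e1 e2]|hne2].
      by right; rewrite e1 e2.
    by left; apply: hQ3.
  exact: (ltx_sum_irr L1 X E1 E2).
split.
- rewrite cfM (bigD1 (Ordinal (leq_addr p2 p1 : (p1 < (p1 + p2).+1)%N))) //=.
  rewrite (bigD1 (Ordinal (leq_addr q2 q1 : (q1 < (q1 + q2).+1)%N))) //= !addKn hP1 hQ1.
  rewrite big1 ?addr0; last first.
    move=> k /= hk.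
    case: (boolp.pselect (cf P p1 k * cf Q p2 (q1 + q2 - k) = 0)) => // h; exfalso.
    have h1 : cf P p1 k != 0 by apply/eqP => ee; apply: h; rewrite ee mul0r.
    have h2 : cf Q (p1 + p2 - p1) (q1 + q2 - k) != 0.
      by rewrite addKn; apply/eqP => ee; apply: h; rewrite ee mulr0.
    have := key p1 k (leq_addr _ _) (ltnSE (ltn_ord k)) h1 h2.
    by case=> ek; move: hk; rewrite -val_eqE /= ek eqxx.
  rewrite big1 ?addr0 // => i /= hi; apply: big1 => k _.
  case: (boolp.pselect (cf P i k * cf Q (p1 + p2 - i) (q1 + q2 - k) = 0)) => // h; exfalso.
  have h1 : cf P i k != 0 by apply/eqP => ee; apply: h; rewrite ee mul0r.
  have h2 : cf Q (p1 + p2 - i) (q1 + q2 - k) != 0.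
    by apply/eqP => ee; apply: h; rewrite ee mulr0.
  have := key i k (ltnSE (ltn_ord i)) (ltnSE (ltn_ord k)) h1 h2.
  by case=> ei; move: hi; rewrite -val_eqE /= ei eqxx.
- by rewrite mulf_neq0.
- move=> n m H hne.
  have [i [k [hi hk h1 h2]]] := cfM_supp H.
  have E1 : sc1 n m = sc1 i k + sc1 (n - i) (m - k) by rewrite -sc1D !subnKC.
  have E2 : sc2 n = sc2 i + sc2 (n - i) by rewrite -sc2D subnKC.
  rewrite E1 E2 sc1D sc2D.
  case: (boolp.pselect ((i, k) = (p1, q1))) => [[ei ek]|hne1].
    case: (boolp.pselect ((n - i, m - k)%N = (p2, q2))) => [[e1 e2]|hne2].
      exfalso; apply: hne; rewrite -(subnKC hi) -(subnKC hk) e1 e2 ei ek //.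
    have L2 := hQ3 _ _ h2 hne2.
    rewrite addrC [sc2 i + _]addrC [sc1 p1 q1 + _]addrC [sc2 p1 + _]addrC.
    by apply: ltx_add => //; right; rewrite ei ek.
  have L1 := hP3 _ _ h1 hne1.
  apply: ltx_add => //.
  case: (boolp.pselect ((n - i, m - k)%N = (p2, q2))) => [[e1 e2]|hne2]; first by right; rewrite e1 e2.
  by left; apply: hQ3.
Qed.

Lemma UM_mul_eq P Q p1 q1 c1 p2 q2 c2 pn pm c : UM P p1 q1 c1 -> UM Q p2 q2 c2 ->
  (p1 + p2)%N = pn -> (q1 + q2)%N = pm -> c1 * c2 = c -> UM (P * Q) pn pm c.
Proof. by move=> H1 H2 <- <- <-; apply: UM_mul. Qed.

Lemma UM_big (I : eqType) (r : seq I) (F : I -> P2) (pn pm : I -> nat) (c : I -> int) :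
  (forall i, i \in r -> UM (F i) (pn i) (pm i) (c i)) ->
  UM (\prod_(i <- r) F i) (\sum_(i <- r) pn i)%N (\sum_(i <- r) pm i)%N (\prod_(i <- r) c i).
Proof.
elim: r => [|x r IH] H; first by rewrite !big_nil; apply: UM_1.
rewrite !big_cons; apply: UM_mul; first by apply: H; rewrite in_cons eqxx.
by apply: IH => i hi; apply: H; rewrite in_cons hi orbT.
Qed.

Lemma UM_exp P pn pm c k : UM P pn pm c -> UM (P ^+ k) (k * pn) (k * pm) (c ^+ k).
Proof.
move=> H; elim: k => [|k IH]; first by rewrite !expr0 !mul0n; apply: UM_1.
rewrite !exprS !mulSn; exact: UM_mul.
Qed.

Lemma ltx_trans_le x1 x2 y1 y2 z1 z2 : ltx x1 x2 y1 y2 \/ (x1 = y1 /\ x2 = y2) ->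
  ltx y1 y2 z1 z2 -> ltx x1 x2 z1 z2.
Proof. rewrite /ltx; lia. Qed.

Lemma UM_SB Q pn pm c qn qm : UM Q pn pm c -> ltx (sc1 pn pm) (sc2 pn) (sc1 qn qm) (sc2 qn) ->
  SB Q qn qm.
Proof.
case=> _ _ H L n m hnm; apply: (ltx_trans_le _ L).
case: (boolp.pselect ((n, m) = (pn, pm))) => [[-> ->]|hne]; first by right.
by left; apply: H.
Qed.

Lemma UM_exp0 P k : UM P 0 0 1 -> UM (P ^+ k) 0 0 1.
Proof.
move=> H; have := UM_exp k H; rewrite muln0 expr1n; exact.
Qed.

Lemma UM_binL k1 i1 l1 k2 i2 l2 : k1 != 0 ->
  ltx (sc1 i2 l2) (sc2 i2) (sc1 i1 l1) (sc2 i1) -> UM (mono k1 i1 l1 + mono k2 i2 l2) i1 l1 k1.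
Proof. by move=> hk L; apply: UM_addS; [apply: UM_mono | apply: SB_mono]. Qed.

Lemma UM_binR k1 i1 l1 k2 i2 l2 : k2 != 0 ->
  ltx (sc1 i1 l1) (sc2 i1) (sc1 i2 l2) (sc2 i2) -> UM (mono k1 i1 l1 + mono k2 i2 l2) i2 l2 k2.
Proof. by move=> hk L; rewrite addrC; apply: UM_binL. Qed.

End UMsec.

Local Open Scope ring_scope.


Definition inc (tB : bool) (a b x j : nat) : bool :=
  if tB then (a * j <= 2 * x * b)%N else (a * j < 2 * x * b)%N.

Definition sgn (bb : bool) : int := if bb then 1 else -1.

Section Fac.
Variables (eU tB : bool) (a b : nat) (sg : int).
Hypothesis hb : (0 < b)%N.
Hypothesis ha : (0 < a)%N || ~~ tB.
Hypothesis hsg : sg = 1 \/ sg = -1.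
Local Notation UMx := (UM (sgn eU) (sgn tB) a%:Z b%:Z).
Local Notation SBx := (SB (sgn eU) (sgn tB) a%:Z b%:Z).
Local Notation s1 := (sc1 (sgn eU) a%:Z b%:Z).
Local Notation s2 := (sc2 (sgn tB)).

Lemma sg0 : sg != 0.
Proof. by case: hsg => ->. Qed.

Lemma UM_etaf ee j N : (0 < j)%N -> UMx (etaf sg ee j N) 0 0 1.
Proof.
move=> hj.
have L : forall k, (0 < k)%N -> ltx (s1 k 0) (s2 k) (s1 0 0) (s2 0).
  move=> k hk; rewrite /sc1 /sc2 /ltx /sgn; move: ha; case: tB => /=; lia.
have hX : - (sg%:~R * qX ^+ j) = mono (- sg) j 0 by rewrite /mono intrN; ring.
rewrite /etaf; case: ee => m.
- apply: UM_exp0.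
  have -> : 1 + sg%:~R * qX ^+ j = mono 1 0 0 + mono sg j 0 by rewrite /mono; ring.
  apply: UM_binL => //; exact: L.
- apply: UM_exp0.
  rewrite big_nat_recl // expr0; apply: UM_addS; first exact: UM_1.
  apply: SB_sum => i _; rewrite hX.
  apply: UM_SB; first by apply: (UM_exp i.+1); apply: UM_mono; rewrite oppr_eq0 sg0.
  by rewrite muln0; apply: L; rewrite muln_gt0 hj.
Qed.

Lemma UM_base x : (0 < x)%N ->
  UMx (YX ^+ (2 * x) + sg%:~R) 0 (if eU then (2 * x)%N else 0%N) (if eU then 1 else sg).
Proof.
move=> hx.
have -> : YX ^+ (2 * x) + sg%:~R = mono 1 0 (2 * x)%N + mono sg 0 0 by rewrite /mono; ring.
case: eU.
- apply: UM_binL => //; rewrite /sc1 /sc2 /ltx /sgn; nia.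
- apply: UM_binR; first exact: sg0.
  rewrite /sc1 /sc2 /ltx /sgn; nia.
Qed.

Lemma UM_F x j : (0 < x)%N -> (0 < j)%N ->
  UMx ((YX ^+ (2 * x) + sg%:~R * qX ^+ j) * (1 + sg%:~R * qX ^+ j * YX ^+ (2 * x)))
    (if inc tB a b x j then j else 0)
    (if eU then (2 * x + (if inc tB a b x j then 2 * x else 0))%N
     else (if inc tB a b x j then 0 else 2 * x)%N)
    (if inc tB a b x j then sg else 1).
Proof.
move=> hx hj.
have -> : YX ^+ (2 * x) + sg%:~R * qX ^+ j = mono 1 0 (2 * x)%N + mono sg j 0 by rewrite /mono; ring.
have -> : 1 + sg%:~R * qX ^+ j * YX ^+ (2 * x) = mono 1 0 0 + mono sg j (2 * x)%N by rewrite /mono; ring.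
have hs := sg0.
rewrite /inc; move: ha; case: eU; case: tB => /= ha'; case: ifP => hi.
all: apply: UM_mul_eq.
all: [> apply: UM_binL | apply: UM_binR | | | | apply: UM_binL | apply: UM_binL | | | |
       apply: UM_binL | apply: UM_binR | | | | apply: UM_binL | apply: UM_binL | | | |
       apply: UM_binR | apply: UM_binL | | | | apply: UM_binL | apply: UM_binL | | | |
       apply: UM_binR | apply: UM_binL | | | | apply: UM_binL | apply: UM_binL | | | ].
all: try (by rewrite ?mul1r ?mulr1 ?add0n ?addn0).
all: try (by rewrite /sc1 /sc2 /ltx /sgn; nia).
Qed.

End Fac.

Local Open Scope ring_scope.


Definition nI tB a b (d : seq nat) N : nat :=
  (\sum_(1 <= j < N.+1) \sum_(x <- d) (if inc tB a b x j then j else 0))%N.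
Definition sI tB a b (d : seq nat) N : nat :=
  (\sum_(1 <= j < N.+1) \sum_(x <- d) (if inc tB a b x j then 2 * x else 0))%N.
Definition mI eU tB a b (d : seq nat) N : nat :=
  if eU then (\sum_(x <- d) 2 * x +
     \sum_(1 <= j < N.+1) \sum_(x <- d) (2 * x + if inc tB a b x j then 2 * x else 0))%N
  else (\sum_(1 <= j < N.+1) \sum_(x <- d) (if inc tB a b x j then 0 else 2 * x))%N.

Lemma UM_prodser eU tB a b sg ee d N : (0 < b)%N -> (0 < a)%N || ~~ tB ->
  sg = 1 \/ sg = -1 -> all (fun x => 0 < x)%N d ->
  exists c, UM (sgn eU) (sgn tB) a%:Z b%:Z (prodser sg ee d N) (nI tB a b d N) (mI eU tB a b d N) c.
Proof.
move=> hb ha hsg hd.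
have hx : forall x, x \in d -> (0 < x)%N by move=> x xd; move/allP: hd => /(_ x xd).
rewrite /prodser; eexists; apply: UM_mul_eq.
- apply: UM_big => x xd; apply: UM_base => //; exact: hx.
- apply: UM_big => j hj; apply: UM_mul_eq.
  + apply: UM_etaf => //; move: hj; rewrite mem_index_iota; by case/andP.
  + apply: UM_big => x xd; apply: UM_F => //; first exact: hx.
    by move: hj; rewrite mem_index_iota; case/andP.
  + by [].
  + by [].
  + by [].
- rewrite big1_eq add0n /nI; apply: eq_bigr => j _; by rewrite add0n.
- rewrite /mI; case: eU => /=.
    congr (_ + _)%N; apply: eq_bigr => j _; by rewrite add0n.
  rewrite big1_eq add0n; apply: eq_bigr => j _; by rewrite add0n.
- by [].
Qed.

Local Open Scope nat_scope.

Lemma le_sum_mem (T : eqType) (s : seq T) (F : T -> nat) x :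
  x \in s -> F x <= \sum_(y <- s) F y.
Proof.
elim: s => [|y s IH] //; rewrite in_cons big_cons => /orP [/eqP <-|h].
  exact: leq_addr.
by apply: leq_trans (IH h) (leq_addl _ _).
Qed.

Lemma sum_neq0 (T : eqType) (s : seq T) (F : T -> nat) :
  \sum_(y <- s) F y != 0 -> exists2 x, x \in s & F x != 0.
Proof.
elim: s => [|y s IH]; first by rewrite big_nil.
rewrite big_cons; case: (boolP (F y == 0)) => [/eqP ->|hy] h.
  by case: (IH h) => x xs fx; exists x => //; rewrite in_cons xs orbT.
by exists y => //; rewrite in_cons eqxx.
Qed.

Lemma sum_range_ext (g : nat -> nat) N M : N <= M -> (forall j, N < j -> g j = 0) ->
  \sum_(1 <= j < N.+1) g j = \sum_(1 <= j < M.+1) g j.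
Proof.
move=> hNM h; rewrite [in RHS](big_cat_nat _ (n := N.+1)) //=.
rewrite [X in _ + X]big1_seq ?addn0 // => j /andP [_]; rewrite mem_index_iota => /andP [hj _].
exact: h.
Qed.

Lemma sum_range_le (g : nat -> nat) N M : N <= M ->
  \sum_(1 <= j < N.+1) g j <= \sum_(1 <= j < M.+1) g j.
Proof.
move=> hNM; rewrite [X in _ <= X](big_cat_nat _ (n := N.+1)) //=; exact: leq_addr.
Qed.

Lemma sum_range_eq (g : nat -> nat) N M : (forall j, 0 < j -> g j != 0 -> j <= N) ->
  (forall j, 0 < j -> g j != 0 -> j <= M) ->
  \sum_(1 <= j < N.+1) g j = \sum_(1 <= j < M.+1) g j.
Proof.
move=> hN hM.
have H : forall N M, N <= M -> (forall j, 0 < j -> g j != 0 -> j <= N) ->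
   \sum_(1 <= j < N.+1) g j = \sum_(1 <= j < M.+1) g j.
  move=> N' M' hle hN'; apply: sum_range_ext => // j hj.
  apply/eqP; apply: contraT => hg.
  have := hN' j (leq_ltn_trans (leq0n _) hj) hg; rewrite leqNgt hj //.
case: (leqP N M) => hle; first exact: H.
by symmetry; apply: H => //; apply: ltnW.
Qed.

Section Comb.
Variables (a b : nat) (d : seq nat).
Let D := sumn d.

Definition Tsum tB N := \sum_(1 <= j < N.+1) \sum_(x <- d)
   (if inc tB a b x j then 2 * x * b - a * j else 0).

Lemma mI_true tB N : mI true tB a b d N = 2 * D + N * (2 * D) + sI tB a b d N.
Proof.
rewrite /mI /sI /D sumnE -big_distrr /=.
rewrite -addnA; congr (_ + _).
rewrite -[N in N * _](subn1 N.+1) -sum_nat_const_nat -big_split /=.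
by apply: eq_bigr => j _; rewrite big_split /= big_distrr.
Qed.

Lemma mI_false tB N : mI false tB a b d N + sI tB a b d N = N * (2 * D).
Proof.
rewrite /mI /sI /D sumnE -big_split /=.
rewrite -[N in N * _](subn1 N.+1) -sum_nat_const_nat.
apply: eq_bigr => j _; rewrite -big_split /= big_distrr /=.
by apply: eq_bigr => x _; case: (inc tB a b x j); rewrite ?addn0 ?add0n.
Qed.

Lemma bsI tB N : b * sI tB a b d N = a * nI tB a b d N + Tsum tB N.
Proof.
rewrite /sI /nI /Tsum !big_distrr -big_split /=; apply: eq_bigr => j _.
rewrite !big_distrr -big_split /=; apply: eq_bigr => x _.
rewrite /inc; case: tB; case: ifP => h; rewrite ?muln0 ?addn0 //; lia.
Qed.

Lemma Tsum_AB N : Tsum true N = Tsum false N.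
Proof.
rewrite /Tsum; apply: eq_bigr => j _; apply: eq_bigr => x _.
rewrite /inc; case: ifP; case: ifP => //; lia.
Qed.

Hypothesis ha : 0 < a.

Definition K0 := 2 * D * b.

Lemma inc_le_K0 tB x j : x \in d -> inc tB a b x j -> j <= K0.
Proof.
move=> xd; have hx : x <= D by rewrite /D sumnE; apply: (le_sum_mem id xd).
rewrite /inc /K0; case: tB; nia.
Qed.

Lemma sum_inc_neq0 tB (h : nat -> nat -> nat) j :
  \sum_(x <- d) (if inc tB a b x j then h x j else 0) != 0 -> exists2 x, x \in d & inc tB a b x j.
Proof.
case/sum_neq0 => x xd; case: ifP => // hi _; by exists x.
Qed.

Lemma stab (h : nat -> nat -> nat) tB N :
  (forall x j, x \in d -> 0 < j -> inc tB a b x j -> j <= N) ->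
  \sum_(1 <= j < N.+1) \sum_(x <- d) (if inc tB a b x j then h x j else 0) =
  \sum_(1 <= j < K0.+1) \sum_(x <- d) (if inc tB a b x j then h x j else 0).
Proof.
move=> H; apply: sum_range_eq => j hj /sum_inc_neq0 [x xd hi].
  exact: H xd hj hi.
exact: inc_le_K0 xd hi.
Qed.

Definition nF tB := nI tB a b d K0.
Definition sF tB := sI tB a b d K0.
Definition TF := Tsum false K0.

Lemma vert_ok tB : nI tB a b d (nF tB) = nF tB /\ sI tB a b d (nF tB) = sF tB.
Proof.
have H : forall x j, x \in d -> 0 < j -> inc tB a b x j -> j <= nF tB.
  move=> x j xd hj hi.
  have hjK : j \in index_iota 1 K0.+1 by rewrite mem_index_iota hj ltnS (inc_le_K0 xd hi).
  rewrite /nF /nI.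
  apply: leq_trans (le_sum_mem (fun j => \sum_(x <- d) (if inc tB a b x j then j else 0)) hjK).
  by apply: leq_trans (le_sum_mem (fun x => if inc tB a b x j then j else 0) xd); rewrite hi.
split; [rewrite /nI | rewrite /sI]; exact: stab.
Qed.

Lemma T_le N : Tsum false N <= TF.
Proof.
rewrite /TF.
have -> : Tsum false K0 = Tsum false (maxn N K0).
  rewrite /Tsum; symmetry; apply: stab => x j xd _ hi; exact: leq_trans (inc_le_K0 xd hi) (leq_maxr _ _).
rewrite /Tsum; apply: sum_range_le; exact: leq_maxl.
Qed.

End Comb.

Local Open Scope nat_scope.

Lemma argmax (T : eqType) (s : seq T) (P : pred T) (le : T -> T -> bool) :
  (forall x y, x \in s -> y \in s -> le x y || le y x) ->
  (forall x y z, x \in s -> y \in s -> z \in s -> le x y -> le y z -> le x z) ->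
  (exists2 x, x \in s & P x) ->
  exists2 x, x \in s & P x /\ forall y, y \in s -> P y -> le y x.
Proof.
elim: s => [|y s IH] htot htr; first by case.
case=> x0 hx0 px0.
have htot' : forall x y, x \in s -> y \in s -> le x y || le y x.
  by move=> ? ? h1 h2; apply: htot; rewrite in_cons ?h1 ?h2 orbT.
have htr' : forall x y z, x \in s -> y \in s -> z \in s -> le x y -> le y z -> le x z.
  by move=> ? ? ? h1 h2 h3; apply: htr; rewrite in_cons ?h1 ?h2 ?h3 orbT.
have yy : y \in y :: s by rewrite in_cons eqxx.
case: (boolP (has P s)) => [/hasP [x1 hx1 px1]|hn].
  have [m hm [pm mmax]] := IH htot' htr' (ex_intro2 _ _ x1 hx1 px1).
  have hm' : m \in y :: s by rewrite in_cons hm orbT.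
  case: (boolP (P y && le m y)) => [/andP [py hmy]|hny].
    exists y => //; split => // z; rewrite in_cons => /orP [/eqP -> _|hz pz].
      by case/orP: (htot y y yy yy).
    by apply: htr (mmax z hz pz) hmy; rewrite // in_cons hz orbT.
  exists m => //; split => // z; rewrite in_cons => /orP [/eqP ->|hz pz]; last exact: mmax.
  move=> py; move: hny; rewrite py /=.
  by case/orP: (htot m y hm' yy) => ->.
have py : P y.
  move: hx0; rewrite in_cons => /orP [/eqP <- //|h].
  by move/hasP: hn => hn; exfalso; apply: hn; exists x0.
exists y => //; split => // z; rewrite in_cons => /orP [/eqP -> _|hz pz].
  by case/orP: (htot y y yy yy).
by exfalso; move/hasP: hn; apply; exists z.
Qed.

Lemma nI_zero tB a b d N : (forall x j, x \in d -> 0 < j -> ~~ inc tB a b x j) -> nI tB a b d N = 0.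
Proof.
move=> H; rewrite /nI big1_seq // => j; rewrite mem_index_iota => /andP [_ /andP [hj _]].
rewrite big1_seq // => x /andP [_ xd]; by rewrite (negbTE (H x j xd hj)).
Qed.

Lemma x_le_D d x : x \in d -> x <= sumn d.
Proof. by move=> xd; rewrite sumnE; apply: (le_sum_mem id xd). Qed.

Lemma nF_le a1 b1 a2 b2 d : 0 < a1 -> 0 < a2 ->
  (forall x j, x \in d -> 0 < j -> inc false a1 b1 x j -> inc true a2 b2 x j) ->
  nF a1 b1 d false <= nF a2 b2 d true.
Proof.
move=> h1 h2 H.
set M := maxn (K0 b1 d) (K0 b2 d).
rewrite /nF /nI.
rewrite -(@stab a1 b1 d h1 (fun x j => j) false M); last first.
  by move=> x j xd _ hi; apply: leq_trans (inc_le_K0 h1 xd hi) (leq_maxl _ _).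
rewrite -(@stab a2 b2 d h2 (fun x j => j) true M); last first.
  by move=> x j xd _ hi; apply: leq_trans (inc_le_K0 h2 xd hi) (leq_maxr _ _).
rewrite big_seq [X in _ <= X]big_seq; apply: leq_sum => j; rewrite mem_index_iota => /andP [hj _].
rewrite big_seq [X in _ <= X]big_seq; apply: leq_sum => x xd.
case: ifP => // hi; by rewrite (H x j xd hj hi).
Qed.

Lemma select d n : all (fun x => 0 < x) d -> d != [::] ->
  exists a b, [/\ 0 < a, 0 < b & nF a b d false <= n <= nF a b d true].
Proof.
move=> hd hne.
have hx : forall x, x \in d -> 0 < x by move=> x xd; move/allP: hd => /(_ x xd).
case: n => [|n].
  exists (2 * sumn d).+1, 1; split => //.
  rewrite /nF nI_zero // => x j xd hj; rewrite /inc -leqNgt.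
  have := x_le_D xd; nia.
set n1 := n.+1.
set cands := [seq (x, j) | x <- d, j <- iota 1 n1].
have mem_c : forall x j, ((x, j) \in cands) = (x \in d) && (0 < j <= n1).
  move=> x j; apply/allpairsP/andP.
    case=> [[x' j'] [xd hj' e]]; case: e => -> ->; split => //.
    by move: hj'; rewrite mem_iota add1n ltnS.
  case=> xd /andP [h1 h2]; exists (x, j); split => //; rewrite mem_iota h1 add1n ltnS //.
have mem_c' : forall c, c \in cands -> (c.1 \in d) && (0 < c.2 <= n1).
  by move=> [x j]; rewrite mem_c.
pose le (c1 c2 : nat * nat) := c1.1 * c2.2 <= c2.1 * c1.2.
have htot : forall c1 c2, le c1 c2 || le c2 c1.
  by move=> c1 c2; rewrite /le; case: (leqP (c1.1 * c2.2) (c2.1 * c1.2)) => h; rewrite ?h // ltnW.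
have htr : forall x y z, x \in cands -> y \in cands -> z \in cands -> le x y -> le y z -> le x z.
  move=> [x1 j1] [x2 j2] [x3 j3] /mem_c' /= /andP [_ /andP [h1 _]] /mem_c' /= /andP [_ /andP [h2 _]]
     /mem_c' /= /andP [_ /andP [h3 _]]; rewrite /le /= => l1 l2.
  have : x1 * j3 * j2 <= x3 * j1 * j2.
    have e1 : x1 * j3 * j2 = (x1 * j2) * j3 by ring.
    have e2 : x3 * j1 * j2 = (x3 * j2) * j1 by ring.
    rewrite e1 e2; apply: leq_trans (_ : x2 * j1 * j3 <= _).
      by rewrite leq_mul2r l1 orbT.
    have e3 : x2 * j1 * j3 = (x2 * j3) * j1 by ring.
    by rewrite e3 leq_mul2r l2 orbT.
  by rewrite leq_mul2r => /orP [/eqP ee|//]; rewrite ee in h2.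
pose Pc (c : nat * nat) := n1 <= nF (2 * c.1) c.2 d true.
have PcX : forall x, x \in d -> Pc (x, n1).
  move=> x xd; rewrite /Pc /nF /nI /=.
  have hK : n1 \in index_iota 1 (K0 n1 d).+1.
    rewrite mem_index_iota /n1 /= ltnS /K0; have := hx x xd; have := x_le_D xd; nia.
  apply: leq_trans (le_sum_mem (fun j => \sum_(x0 <- d) (if inc true (2 * x) n1 x0 j then j else 0)) hK).
  apply: leq_trans (le_sum_mem (fun x0 => if inc true (2 * x) n1 x0 n1 then n1 else 0) xd).
  by rewrite /inc leqnn.
have [x0 x0d] : exists x, x \in d by exists (nth 0 d 0); rewrite mem_nth // lt0n size_eq0.
have hc0 : (x0, n1) \in cands by rewrite mem_c x0d /= leqnn.
have [[xs js] hcs [Pcs csmax]] := @argmax _ cands Pc le (fun x y _ _ => htot x y) htr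
   (ex_intro2 _ _ (x0, n1) hc0 (PcX x0 x0d)).
have /andP [xsd /andP [hjs _]] := mem_c' _ hcs; rewrite /= in xsd hjs.
have hxs := hx xs xsd.
exists (2 * xs), js; split => //; first by rewrite muln_gt0.
apply/andP; split; last exact: Pcs.
have Alt : forall x j, x \in d -> 0 < j -> inc false (2 * xs) js x j -> j < n1.
  move=> x j xd hj hi; rewrite ltnNge; apply/negP => hnj.
  have := csmax (x, n1); rewrite mem_c xd leqnn /= => /(_ isT (PcX x xd)).
  move: hi; rewrite /le /inc /=; nia.
rewrite leqNgt; apply/negP => hlt.
have [j1 hj1 /sum_inc_neq0 [x1 x1d hi1]] : exists2 j, j \in index_iota 1 (K0 js d).+1 &
    \sum_(x <- d) (if inc false (2 * xs) js x j then j else 0) != 0.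
  apply: sum_neq0; rewrite -lt0n; exact: leq_ltn_trans (leq0n n1) hlt.
move: hj1; rewrite mem_index_iota => /andP [hj1 _].
have hc1 : (x1, j1) \in cands by rewrite mem_c x1d hj1 /=; apply: ltnW; exact: (Alt _ _ x1d hj1 hi1).
pose PA (c : nat * nat) := inc false (2 * xs) js c.1 c.2.
pose ge c1 c2 := le c2 c1.
have [[x' j'] hc' [PA' cmin]] := @argmax _ cands PA ge (fun x y _ _ => htot y x)
  (fun x y z hx hy hz l1 l2 => htr z y x hz hy hx l2 l1)
  (ex_intro2 _ _ (x1, j1) hc1 hi1).
have /andP [x'd /andP [hj' _]] := mem_c' _ hc'; rewrite /= in x'd hj'.
have nPc' : ~~ Pc (x', j').
  apply/negP => hp; have := csmax _ hc' hp; move: PA'; rewrite /le /PA /inc /=; nia.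
have : nF (2 * xs) js d false <= nF (2 * x') j' d true.
  apply: nF_le; [by rewrite muln_gt0 hxs | by rewrite muln_gt0 (hx _ x'd) | ].
  move=> x j xd hj hi.
  have hc : (x, j) \in cands by rewrite mem_c xd hj /=; apply: ltnW; exact: (Alt _ _ xd hj hi).
  have := cmin _ hc hi; rewrite /ge /le /inc /= => h; by rewrite -!mulnA leq_mul2l h orbT.
move: nPc'; rewrite /Pc /= -ltnNge => h1 h2.
by move: (leq_ltn_trans h2 h1); rewrite ltnNge ltnW.
Qed.

Local Open Scope ring_scope.


Section Conv.
Variable R : realType.
Implicit Types P Q : set (R * R).

Lemma split_l m1 m2 (j : 'I_m1) : fintype.split (lshift m2 j) = inl j.
Proof. exact: (unsplitK (inl j : 'I_m1 + 'I_m2)). Qed.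
Lemma split_r m1 m2 (j : 'I_m2) : fintype.split (rshift m1 j) = inr j.
Proof. exact: (unsplitK (inr j : 'I_m1 + 'I_m2)). Qed.

Lemma conv_in P x : P x -> Defs.conv P x.
Proof.
move=> px; exists 1%N, (fun _ => 1), (fun _ => x).
split; first by move=> _; exact: ler01.
split; first by rewrite big_ord1.
split; first by [].
by rewrite !big_ord1 !mul1r -surjective_pairing.
Qed.

Lemma conv_comb P x y (l : R) z : Defs.conv P x -> Defs.conv P y -> 0 <= l -> l <= 1 ->
  z.1 = l * x.1 + (1 - l) * y.1 -> z.2 = l * x.2 + (1 - l) * y.2 -> Defs.conv P z.
Proof.
move=> [m1 [w1 [p1 [w1p [s1 [P1 ex]]]]]] [m2 [w2 [p2 [w2p [s2 [P2 ey]]]]]] l0 l1 ez1 ez2.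
exists (m1 + m2)%N.
exists (fun i => match fintype.split i with inl j => l * w1 j | inr j => (1 - l) * w2 j end).
exists (fun i => match fintype.split i with inl j => p1 j | inr j => p2 j end).
split; [|split; [|split]].
- move=> i; case: (fintype.split i) => j; apply: mulr_ge0 => //; by rewrite subr_ge0.
- rewrite big_split_ord /=.
  transitivity (l * \sum_(i < m1) w1 i + (1 - l) * \sum_(i < m2) w2 i).
    rewrite !mulr_sumr; congr (_ + _); apply: eq_bigr => i _; by rewrite ?split_l ?split_r.
  by rewrite s1 s2 !mulr1 addrC subrK.
- by move=> i; case: (fintype.split i).
- rewrite [z]surjective_pairing; congr (_, _).
  + rewrite ez1 ex ey /= big_split_ord /= !mulr_sumr; congr (_ + _);
      apply: eq_bigr => i _; by rewrite ?split_l ?split_r mulrA.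
  + rewrite ez2 ex ey /= big_split_ord /= !mulr_sumr; congr (_ + _);
      apply: eq_bigr => i _; by rewrite ?split_l ?split_r mulrA.
Qed.

Definition convex_set Q := forall x y (l : R), Q x -> Q y -> 0 <= l -> l <= 1 ->
  Q (l * x.1 + (1 - l) * y.1, l * x.2 + (1 - l) * y.2).

Lemma conv_sub P Q : convex_set Q -> P `<=` Q -> Defs.conv P `<=` Q.
Proof.
move=> cQ PQ x [m [w [p [wp [sw [Pp ->]]]]]].
elim: m w p wp sw Pp => [|m IH] w p wp sw Pp.
  by move: sw; rewrite big_ord0 => /eqP; rewrite eq_sym oner_eq0.
rewrite !big_ord_recr /=.
set W := \sum_(i < m) w (widen_ord (leqnSn m) i).
have W0 : 0 <= W by apply: sumr_ge0 => i _.
move: sw; rewrite big_ord_recr /= -/W => sw.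
have hl : w ord_max = 1 - W by rewrite -sw addrAC subrr add0r.
case: (eqVneq W 0) => hW.
  have z : forall i : 'I_m, w (widen_ord (leqnSn m) i) = 0.
    by move=> i; apply: (psumr_eq0P (fun i _ => wp _) hW).
  rewrite !big1 ?add0r; [|by move=> i _; rewrite z mul0r|by move=> i _; rewrite z mul0r].
  rewrite hl hW subr0 !mul1r; rewrite -surjective_pairing; exact: PQ.
have Wp : 0 < W by rewrite lt_neqAle eq_sym hW W0.
have HQ := IH (fun i => w (widen_ord (leqnSn m) i) / W) (fun i => p (widen_ord (leqnSn m) i)).
have := HQ _ _ (fun i => Pp _).
  move=> /(_ _ _) H.
have q : Q (\sum_(i < m) w (widen_ord (leqnSn m) i) / W * (p (widen_ord (leqnSn m) i)).1,
            \sum_(i < m) w (widen_ord (leqnSn m) i) / W * (p (widen_ord (leqnSn m) i)).2).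
  apply: H.
    by move=> i; apply: divr_ge0.
  by rewrite -mulr_suml -/W divff.
have := cQ _ _ W q (PQ _ (Pp ord_max)) W0.
have W1 : W <= 1 by rewrite -sw lerDl.
move=> /(_ W1); rewrite hl /=.
have e1 : forall f : 'I_m -> R, W * (\sum_(i < m) w (widen_ord (leqnSn m) i) / W * f i) =
   \sum_(i < m) w (widen_ord (leqnSn m) i) * f i.
  move=> f; rewrite mulr_sumr; apply: eq_bigr => i _.
  by rewrite mulrA mulrCA divff ?mulr1 // gt_eqF.
by rewrite !e1.
Qed.

Lemma convA_convex P : convex_set (Defs.convA P).
Proof.
move=> x y l [y1 [t1 [c1 [t10 ->]]]] [y2 [t2 [c2 [t20 ->]]]] l0 l1.
exists (l * y1.1 + (1 - l) * y2.1, l * y1.2 + (1 - l) * y2.2), (l * t1 + (1 - l) * t2).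
split; [|split].
- by apply: (conv_comb c1 c2 l0 l1).
- apply: addr_ge0; apply: mulr_ge0 => //; by rewrite subr_ge0.
- rewrite /=; congr (_, _); ring.
Qed.

Lemma conv_convA P x : Defs.conv P x -> Defs.convA P x.
Proof. move=> cx; exists x, 0; split => //; split => //; rewrite addr0; by case: x {cx}. Qed.

Lemma convA_sub P Q : P `<=` Defs.convA Q -> Defs.convA P `<=` Defs.convA Q.
Proof.
move=> PQ x [y [t [cy [t0 ->]]]].
have [y' [t' [cy' [t0' ey]]]] := conv_sub (@convA_convex Q) PQ cy.
exists y', (t' + t); split => //; split; first exact: addr_ge0.
by rewrite ey /= addrA.
Qed.

Lemma nuJ_sub P Q : P `<=` Defs.convA Q -> nuJ P `<=` nuJ Q.
Proof. move=> h; apply: closureS; exact: convA_sub. Qed.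

End Conv.

Local Open Scope ring_scope.


Lemma bound_int sg u d n s a b : (0 < b)%N -> sg = 1 \/ sg = -1 -> all (fun x => 0 < x)%N d ->
  coefser sg u d n s != 0 ->
  b%:Z * s - a%:Z * n%:Z <= (b * sumn d + Tsum a b d false n)%N%:Z /\
  - (b%:Z * s) - a%:Z * n%:Z <= (b * sumn d + Tsum a b d false n)%N%:Z.
Proof.
move=> hb hsg hd; rewrite /coefser /=.
set sh := (sumn d + n * (2 * sumn d))%N.
case E: (s + sh%:Z) => [m|] // hc.
have hc' : cf (prodser sg ((size d)%:Z + u) d n) n m != 0 by [].
have [c1 U1] := @UM_prodser true false a b sg ((size d)%:Z + u) d n hb (orbT _) hsg hd.
have [c2 U2] := @UM_prodser false false a b sg ((size d)%:Z + u) d n hb (orbT _) hsg hd.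
have L1 := UM_le U1 hc'; have L2 := UM_le U2 hc'.
move: L1 L2; rewrite /sc1 /sgn mI_true.
have F1 := @mI_false a b d false n.
have F2 := @bsI a b d false n.
set mI2 := mI false false a b d n in F1 *.
set sI0 := sI false a b d n in F1 F2 *.
set nI0 := nI false a b d n in F2 *.
set T := Tsum a b d false n in F2 *.
have Em : (b%:Z * m%:Z) = b%:Z * s + b%:Z * (sumn d)%:Z + b%:Z * (n * (2 * sumn d))%N%:Z.
  by rewrite -E /sh PoszD; ring.
have F1' : (b%:Z * mI2%:Z) + (b * sI0)%N%:Z = b%:Z * (n * (2 * sumn d))%N%:Z.
  by rewrite -F1 PoszD PoszM; ring.
have F2' : (b * sI0)%N%:Z = (a * nI0)%N%:Z + T%:Z by rewrite F2 PoszD.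
rewrite !PoszD !PoszM in F1' F2' Em *.
move=> L1 L2; split; lia.
Qed.

Lemma vertex sg u d a b eU tB : (0 < a)%N -> (0 < b)%N -> sg = 1 \/ sg = -1 ->
  all (fun x => 0 < x)%N d ->
  coefser sg u d (nF a b d tB)
    (if eU then (sumn d + sF a b d tB)%N%:Z else - (sumn d + sF a b d tB)%N%:Z) != 0.
Proof.
move=> ha hb hsg hd.
set N := nF a b d tB.
have [hn hs] := @vert_ok a b d ha tB.
have [c [hc hc0 _]] := @UM_prodser eU tB a b sg ((size d)%:Z + u) d N hb (introT orP (or_introl ha)) hsg hd.
rewrite -/N in hn hs; rewrite hn in hc.
rewrite /coefser /=.
have -> : (if eU then (sumn d + sF a b d tB)%N%:Z else - (sumn d + sF a b d tB)%N%:Z) +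
     (sumn d + N * (2 * sumn d))%N%:Z = (mI eU tB a b d N)%:Z.
  case: eU {hc}.
    by rewrite mI_true hs !PoszD !PoszM; lia.
  have F1 := @mI_false a b d tB N; rewrite hs in F1.
  have : (mI false tB a b d N)%:Z = (N * (2 * sumn d))%N%:Z - (sF a b d tB)%:Z by rewrite -F1 PoszD; ring.
  rewrite !PoszD !PoszM; lia.
by move: hc; rewrite /cf => ->.
Qed.

Local Open Scope ring_scope.


Lemma geom (R : realType) (P : set (R * R)) (v nA nB yA yB a b n s : R) :
  0 < b -> nA <= n -> n <= nB -> b * (yB - yA) = a * (nB - nA) ->
  b * s <= a * (n - nA) + b * yA -> - (b * s) <= a * (n - nA) + b * yA ->
  P (v + nA, yA / 2) -> P (v + nA, - yA / 2) -> P (v + nB, yB / 2) -> P (v + nB, - yB / 2) ->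
  Defs.conv P (v + n, s / 2).
Proof.
move=> hb h1 h2 hy hs1 hs2 PA PA' PB PB'.
have b0 : b != 0 by rewrite gt_eqF.
set L := yA + a * (n - nA) / b.
have hL1 : s <= L.
  rewrite /L -(ler_pM2l hb) mulrDr mulrCA mulfV // mulr1; lra.
have hL2 : - s <= L.
  rewrite /L -(ler_pM2l hb) mulrDr mulrCA mulfV // mulr1; lra.
have Top : Defs.conv P (v + n, L / 2) /\ Defs.conv P (v + n, - L / 2).
  case: (eqVneq nA nB) => hAB.
    have en : n = nA by apply/eqP; rewrite eq_le h1 hAB h2.
    have eL : L = yA by rewrite /L en subrr mulr0 mul0r addr0.
    by rewrite eL en; split; apply: conv_in.
  have hd : 0 < nB - nA by rewrite subr_gt0 lt_neqAle hAB (le_trans h1 h2).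
  have d0 : nB - nA != 0 by rewrite gt_eqF.
  set w := (n - nA) / (nB - nA).
  have w0 : 0 <= w by apply: divr_ge0; [rewrite subr_ge0 | exact: ltW].
  have w1 : w <= 1 by rewrite ler_pdivrMr // mul1r lerD2r.
  have hyB : yB = yA + a * (nB - nA) / b.
    by rewrite -hy mulrC mulrA mulVf // mul1r addrC subrK.
  split.
    apply: (conv_comb (l := 1 - w) (conv_in PA) (conv_in PB)); rewrite ?subr_ge0 ?lerBlDr ?lerDl //=.
      rewrite /w; field; exact: d0.
    rewrite /L hyB /w; field; apply/andP; split => //.
  apply: (conv_comb (l := 1 - w) (conv_in PA') (conv_in PB')); rewrite ?subr_ge0 ?lerBlDr ?lerDl //=.
    rewrite /w; field; exact: d0.
  rewrite /L hyB /w; field; apply/andP; split => //.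
case: Top => Top Bot.
case: (eqVneq L 0) => hL0.
  have -> : s = 0 by apply/eqP; rewrite eq_le; apply/andP; split; lra.
  by move: Top; rewrite hL0 mul0r.
have Lp : 0 < L by rewrite lt_neqAle eq_sym hL0 /=; lra.
apply: (conv_comb (l := (L + s) / (2 * L)) Top Bot).
- by apply: divr_ge0; lra.
- by rewrite ler_pdivrMr ?mul1r; lra.
- by rewrite /=; field; rewrite gt_eqF.
- by rewrite /=; field; rewrite gt_eqF.
Qed.

Local Open Scope ring_scope.


Lemma main_incl (R : realType) u d sg1 sg2 : all (fun x => 0 < x)%N d ->
  sg1 = 1 \/ sg1 = -1 -> sg2 = 1 \/ sg2 = -1 ->
  supp (vexp R u d) (coefser sg1 u d) `<=` Defs.convA (supp (vexp R u d) (coefser sg2 u d)).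
Proof.
move=> hd hsg1 hsg2 p [n [s [hc ->]]].
set v := vexp R u d.
case: (eqVneq d [::]) => [hd0|hne].
  have [B1 B2] := bound_int 0 (b:=1) isT hsg1 hd hc.
  have T0 : Tsum 0 1 d false n = 0%N by rewrite /Tsum hd0 big1 // => j _; rewrite big_nil.
  rewrite T0 hd0 /= in B1 B2.
  have s0 : s = 0 by lia.
  have V := @vertex sg2 u d 1 1 true false isT isT hsg2 hd.
  have nF0 : nF 1 1 d false = 0%N by rewrite /nF /nI hd0 big1 // => j _; rewrite big_nil.
  have sF0 : sF 1 1 d false = 0%N by rewrite /sF /sI hd0 big1 // => j _; rewrite big_nil.
  rewrite nF0 sF0 in V.
  exists (v + 0%:R, 0%:~R / 2), n%:R; split; last split.
  - apply: conv_in; exists 0%N, 0; split => //.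
    by move: V; rewrite hd0 /=.
  - by rewrite ler0n.
  - by rewrite s0 /= addr0.
have [a [b [ha hb /andP [h1 h2]]]] := select n hd hne.
have [B1 B2] := bound_int a hb hsg1 hd hc.
have TL := T_le b d ha n.
have EA := bsI a b d false (K0 b d).
have EB := bsI a b d true (K0 b d).
rewrite Tsum_AB in EB.
set nA := nF a b d false in h1 EA *.
set nB := nF a b d true in h2 EB *.
set sA := sF a b d false in EA *.
set sB := sF a b d true in EB *.
set T := Tsum a b d false (K0 b d) in EA EB TL.
have V1 := @vertex sg2 u d a b true false ha hb hsg2 hd.
have V2 := @vertex sg2 u d a b false false ha hb hsg2 hd.
have V3 := @vertex sg2 u d a b true true ha hb hsg2 hd.
have V4 := @vertex sg2 u d a b false true ha hb hsg2 hd.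
rewrite -/nA -/nB -/sA -/sB /= in V1 V2 V3 V4.
apply: conv_convA.
pose yA : R := (sumn d + sA)%N%:R.
pose yB : R := (sumn d + sB)%N%:R.
have hs : (s%:~R / 2 : R) = s%:~R / 2 by [].
apply: (@geom R _ v nA%:R nB%:R yA yB a%:R b%:R n%:R s%:~R).
- by rewrite ltr0n.
- by rewrite ler_nat.
- by rewrite ler_nat.
- have eA : (b%:R * sA%:R : R) = a%:R * nA%:R + T%:R by rewrite -!natrM -natrD EA.
  have eB : (b%:R * sB%:R : R) = a%:R * nB%:R + T%:R by rewrite -!natrM -natrD EB.
  have -> : (b%:R * (yB - yA) : R) = b%:R * sB%:R - b%:R * sA%:R by rewrite /yA /yB !natrD; ring.
  rewrite eA eB; ring.
- have BR : (b%:R * s%:~R - a%:R * n%:R : R) <= (b * sumn d + T)%N%:R.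
    have H : b%:Z * s - a%:Z * n%:Z <= (b * sumn d + T)%N%:Z.
      apply: le_trans B1 _; rewrite lez_nat leq_add2l; exact: TL.
    by move: H; rewrite -(ler_int R) intrB !intrM.
  have eA : (b%:R * sA%:R : R) = a%:R * nA%:R + T%:R by rewrite -!natrM -natrD EA.
  have eyA : (b%:R * yA : R) = b%:R * (sumn d)%:R + b%:R * sA%:R by rewrite /yA natrD mulrDr.
  move: BR; rewrite natrD natrM => BR; rewrite eyA; lra.
- have BR : (- (b%:R * s%:~R) - a%:R * n%:R : R) <= (b * sumn d + T)%N%:R.
    have H : - (b%:Z * s) - a%:Z * n%:Z <= (b * sumn d + T)%N%:Z.
      apply: le_trans B2 _; rewrite lez_nat leq_add2l; exact: TL.
    by move: H; rewrite -(ler_int R) intrB intrN !intrM.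
  have eA : (b%:R * sA%:R : R) = a%:R * nA%:R + T%:R by rewrite -!natrM -natrD EA.
  have eyA : (b%:R * yA : R) = b%:R * (sumn d)%:R + b%:R * sA%:R by rewrite /yA natrD mulrDr.
  move: BR; rewrite natrD natrM => BR; rewrite eyA; lra.
- by exists nA, (sumn d + sA)%N%:Z.
- by exists nA, (- (sumn d + sA)%N%:Z); split => //; rewrite intrN mulNr.
- by exists nB, (sumn d + sB)%N%:Z.
- by exists nB, (- (sumn d + sB)%N%:Z); split => //; rewrite intrN mulNr.
Qed.

Theorem lemma6p3 (R : realType) (u : int) (d : seq nat)
    (hd : all (fun x => 0 < x)%N d) :
  nuJ (supp (vexp R u d) (coef_quot u d)) = nuJ (supp (vexp R u d) (coef_phi u d)).
Proof.
apply/seteqP; split; apply: nuJ_sub; apply: main_incl => //; by [left | right].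
Qed.
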